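(* Let $\langle B,\wedge,{}'\rangle$ be an algebra with $\wedge$ binary and ${}'$ unary satisfying $x\wedge(y\wedge z)\approx y\wedge(z\wedge x)$ and $x\approx (x'\wedge y)'\wedge(x'\wedge y')'$. Then $x\wedge(y\wedge z)=(x\wedge y)\wedge z$ for all $x,y,z\in B$. *)


Theorem corollary4p21 (B : Type) (meet : B -> B -> B) (comp : B -> B)
  (H1 : forall x y z : B, meet x (meet y z) = meet y (meet z x))
  (H2 : forall x y : B,
      x = meet (comp (meet (comp x) y)) (comp (meet (comp x) (comp y)))) :
  forall x y z : B, meet x (meet y z) = meet (meet x y) z.
Proof.
  assert (E0 : forall v0 v1 : B, v0 = (meet (comp (meet (comp v0) v1)) (comp (meet (comp v0) (comp v1))))).
  { intros v0 v1. exact (H2 v0 v1). }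
  assert (E2 : forall v0 v1 v2 : B, (meet v0 (meet v1 v2)) = (meet v1 (meet v2 v0))).
  { intros v0 v1 v2. exact (H1 v0 v1 v2). }
  assert (E3 : forall v0 v1 v2 : B, (meet v0 v1) = (meet (comp (meet (comp v1) v2)) (meet (comp (meet (comp v1) (comp v2))) v0))).
  { intros v0 v1 v2. exact (eq_trans (f_equal (fun h : B => (meet v0 h)) (E0 v1 v2)) (eq_trans (eq_sym (E2 (comp (meet (comp v1) (comp v2))) v0 (comp (meet (comp v1) v2)))) (eq_sym (E2 (comp (meet (comp v1) v2)) (comp (meet (comp v1) (comp v2))) v0)))). }
  assert (E9 : forall v0 v1 v2 v3 : B, (meet v0 (meet v1 (meet v2 v3))) = (meet (meet v3 v1) (meet v0 v2))).
  { intros v0 v1 v2 v3. exact (eq_trans (f_equal (fun h : B => (meet v0 h)) (E2 v1 v2 v3)) (eq_sym (E2 (meet v3 v1) v0 v2))). }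
  assert (E11 : forall v0 v1 v2 v3 : B, (meet v0 (meet v1 (meet v2 v3))) = (meet v2 (meet (meet v3 v1) v0))).
  { intros v0 v1 v2 v3. exact (eq_trans (f_equal (fun h : B => (meet v0 h)) (E2 v1 v2 v3)) (E2 v0 v2 (meet v3 v1))). }
  assert (E16 : forall v0 v1 v2 v3 : B, (meet v0 (meet v1 (meet v2 v3))) = (meet (meet v1 v2) (meet v0 v3))).
  { intros v0 v1 v2 v3. exact (eq_trans (f_equal (fun h : B => (meet v0 h)) (eq_sym (E2 v3 v1 v2))) (eq_sym (E2 (meet v1 v2) v0 v3))). }
  assert (E19 : forall v0 v1 v2 v3 : B, (meet v0 (meet v1 (meet v2 v3))) = (meet v3 (meet (meet v1 v2) v0))).
  { intros v0 v1 v2 v3. exact (eq_trans (f_equal (fun h : B => (meet v0 h)) (eq_sym (E2 v3 v1 v2))) (E2 v0 v3 (meet v1 v2))). }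
  assert (E87 : forall v0 v1 v2 v3 : B, (meet v0 (meet (meet v1 v2) v3)) = (meet (meet v2 v0) (meet v3 v1))).
  { intros v0 v1 v2 v3. exact (eq_trans (eq_sym (E2 v3 v0 (meet v1 v2))) (E9 v3 v0 v1 v2)). }
  assert (E96 : forall v0 v1 v2 v3 v4 : B, (meet v0 (meet (meet v1 v2) v3)) = (meet (comp (meet (comp v1) v4)) (meet v0 (meet (meet (comp (meet (comp v1) (comp v4))) v3) v2)))).
  { intros v0 v1 v2 v3 v4. exact (eq_trans (E87 v0 v1 v2 v3) (eq_trans (f_equal (fun h : B => (meet (meet v2 v0) h)) (E3 v3 v1 v4)) (eq_sym (E9 (comp (meet (comp v1) v4)) v0 (meet (comp (meet (comp v1) (comp v4))) v3) v2)))). }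
  assert (E139 : forall v0 v1 v2 v3 v4 : B, (meet (comp (meet (comp v0) v1)) (meet v2 (meet v3 (meet (comp (meet (comp v0) (comp v1))) v4)))) = (meet (meet (meet v4 v3) v2) v0)).
  { intros v0 v1 v2 v3 v4. exact (eq_trans (f_equal (fun h : B => (meet (comp (meet (comp v0) v1)) h)) (E11 v2 v3 (comp (meet (comp v0) (comp v1))) v4)) (eq_sym (E3 (meet (meet v4 v3) v2) v0 v1))). }
  assert (E231 : forall v0 v1 v2 v3 : B, (meet v0 (meet (meet v1 v2) v3)) = (meet (meet (meet v3 v0) v2) v1)).
  { intros v0 v1 v2 v3. exact (eq_trans (E87 v0 v1 v2 v3) (eq_trans (f_equal (fun h : B => (meet (meet v2 v0) h)) (E3 v3 v1 v0)) (eq_trans (eq_sym (E16 (comp (meet (comp v1) v0)) v2 v0 (meet (comp (meet (comp v1) (comp v0))) v3))) (E139 v1 v0 v2 v0 v3)))). }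
  assert (E232 : forall v0 v1 v2 v3 : B, (meet v0 (meet v1 (meet v2 v3))) = (meet v0 (meet (meet v3 v2) v1))).
  { intros v0 v1 v2 v3. exact (eq_trans (f_equal (fun h : B => (meet v0 (meet v1 h))) (E3 v2 v3 v0)) (eq_trans (E16 v0 v1 (comp (meet (comp v3) v0)) (meet (comp (meet (comp v3) (comp v0))) v2)) (eq_trans (E11 (meet v1 (comp (meet (comp v3) v0))) v0 (comp (meet (comp v3) (comp v0))) v2) (eq_trans (E19 (comp (meet (comp v3) (comp v0))) (meet v2 v0) v1 (comp (meet (comp v3) v0))) (eq_trans (f_equal (fun h : B => (meet (comp (meet (comp v3) v0)) h)) (eq_sym (E231 v0 (comp (meet (comp v3) (comp v0))) v1 v2))) (eq_sym (E96 v0 v3 v2 v1 v0))))))). }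
  assert (E380 : forall v0 v1 v2 : B, (meet (meet v0 v1) v2) = (meet v0 (meet v1 v2))).
  { intros v0 v1 v2. exact (eq_trans (E3 (meet v0 v1) v2 v0) (eq_trans (E11 (comp (meet (comp v2) v0)) (comp (meet (comp v2) (comp v0))) v0 v1) (eq_trans (eq_sym (E232 v0 (comp (meet (comp v2) v0)) (comp (meet (comp v2) (comp v0))) v1)) (f_equal (fun h : B => (meet v0 h)) (eq_sym (E3 v1 v2 v0)))))). }
  assert (E385 : forall v0 v1 : B, (meet v0 v1) = (meet v1 v0)).
  { intros v0 v1. exact (eq_trans (f_equal (fun h : B => (meet h v1)) (E0 v0 v0)) (eq_trans (E380 (comp (meet (comp v0) v0)) (comp (meet (comp v0) (comp v0))) v1) (eq_sym (E3 v1 v0 v0)))). }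
  assert (Egoal : forall k0 k1 : B, (meet k0 k1) = (meet k1 k0)).
  { intros k0 k1. exact (E385 k0 k1). }
  intros x y z.
  rewrite (H1 x y z), (H1 y z x).
  apply Egoal.
Qed.
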